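(* Let $M$ be a free $\mathbb{T}$-module with a finite $\mathbb{T}$-basis $\{\widehat m_1,\dots,\widehat m_n\}$, let $V=\{\sum_{l=1}^n x_l\widehat m_l : x_l\in\mathbb{C}(\mathbf{i_1})\}\subset M$, and let $(V^2,+_{V^2},\cdot_{V^2})$ be the $\mathbb{T}$-module defined below. Let $\{\widehat v_1,\dots,\widehat v_n\}$ be a basis of the vector space $V$ over $\mathbb{C}(\mathbf{i_1})$. Then $\{(\widehat v_l;\widehat v_l): l=1,\dots,n\}$ is a basis of the $\mathbb{T}$-module $V^2$ (so $V^2$ is free), and $\{\widehat v_1,\dots,\widehat v_n\}$ is a $\mathbb{T}$-basis of $M$.
   Context: Bicomplex numbers: $\mathbb{T}=\{z_1+z_2\mathbf{i_2}: z_1,z_2\in\mathbb{C}(\mathbf{i_1})\}$, where $\mathbb{C}(\mathbf{i_1})=\{x+y\mathbf{i_1}: x,y\in\mathbb{R}\}$, with $\mathbf{i_1}^2=\mathbf{i_2}^2=-1$, $\mathbf{i_1}\mathbf{i_2}=\mathbf{i_2}\mathbf{i_1}=\mathbf{j}$, $\mathbf{j}^2=1$; $\mathbb{T}$ is a commutative ring. The idempotents are $\mathbf{e_1}=(1+\mathbf{j})/2$, $\mathbf{e_2}=(1-\mathbf{j})/2$, with $\mathbf{e_1}^2=\mathbf{e_1}$, $\mathbf{e_2}^2=\mathbf{e_2}$, $\mathbf{e_1}\mathbf{e_2}=0$, $\mathbf{e_1}+\mathbf{e_2}=1$; every $\lambda\in\mathbb{T}$ is uniquely $\lambda=\lambda_1\mathbf{e_1}+\lambda_2\mathbf{e_2}$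 with $\lambda_1,\lambda_2\in\mathbb{C}(\mathbf{i_1})$. $V^2=\{(\widehat X;\widehat Y): \widehat X,\widehat Y\in V\}$ with addition $(\widehat X_1;\widehat Y_1)+_{V^2}(\widehat X_2;\widehat Y_2)=(\widehat X_1+\widehat X_2;\widehat Y_1+\widehat Y_2)$ and scalar multiplication $\lambda\cdot_{V^2}(\widehat X;\widehat Y)=(\lambda_1\widehat X;\lambda_2\widehat Y)$ for $\lambda=\lambda_1\mathbf{e_1}+\lambda_2\mathbf{e_2}$. *)

(* Defs.v *)
From HB Require Import structures.
From mathcomp Require Import all_boot all_order all_algebra.
From mathcomp Require Import complex.
From mathcomp Require Import reals.
From mathcomp Require Import ring.
Set Implicit Arguments. Unset Strict Implicit. Unset Printing Implicit Defensive.
Import Order.TTheory GRing.Theory Num.Theory.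
Local Open Scope ring_scope.

(* Bicomplex numbers z1 + z2 i2 with z1, z2 in a commutative ring K
   (K will be C(i1) = R[i], R the real numbers). *)
Record bicomplex (K : Type) : Type := BiC { bc1 : K; bc2 : K }.

Section Bicomplex.
Variable K : comNzRingType.
Local Notation T := (bicomplex K).

Definition bc_to_pair (x : T) : K * K := (bc1 x, bc2 x).
Definition bc_of_pair (p : K * K) : T := BiC p.1 p.2.
Lemma bc_pairK : cancel bc_to_pair bc_of_pair. Proof. by case. Qed.

HB.instance Definition _ := Choice.copy T (can_type bc_pairK).

Definition bc_add (x y : T) := BiC (bc1 x + bc1 y) (bc2 x + bc2 y).
Definition bc_opp (x : T) := BiC (- bc1 x) (- bc2 x).
Definition bc_zero : T := BiC 0 0.

Lemma bc_addA : associative bc_add.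
Proof. by move=> [a b] [c d] [e f]; rewrite /bc_add /= !addrA. Qed.
Lemma bc_addC : commutative bc_add.
Proof. by move=> [a b] [c d]; rewrite /bc_add /= (addrC a) (addrC b). Qed.
Lemma bc_add0 : left_id bc_zero bc_add.
Proof. by move=> [a b]; rewrite /bc_add /= !add0r. Qed.
Lemma bc_addN : left_inverse bc_zero bc_opp bc_add.
Proof. by move=> [a b]; rewrite /bc_add /= !addNr. Qed.

HB.instance Definition _ := GRing.isZmodule.Build T bc_addA bc_addC bc_add0 bc_addN.

(* (z1 + z2 i2)(w1 + w2 i2) = (z1 w1 - z2 w2) + (z1 w2 + z2 w1) i2 *)
Definition bc_mul (x y : T) :=
  BiC (bc1 x * bc1 y - bc2 x * bc2 y) (bc1 x * bc2 y + bc2 x * bc1 y).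
Definition bc_one : T := BiC 1 0.

Lemma bc_mulA : associative bc_mul.
Proof. by move=> [a b] [c d] [e f]; rewrite /bc_mul /=; congr BiC; ring. Qed.
Lemma bc_mulC : commutative bc_mul.
Proof. by move=> [a b] [c d]; rewrite /bc_mul /=; congr BiC; ring. Qed.
Lemma bc_mul1 : left_id bc_one bc_mul.
Proof. by move=> [a b]; rewrite /bc_mul /=; congr BiC; ring. Qed.
Lemma bc_mulDl : left_distributive bc_mul bc_add.
Proof. by move=> [a b] [c d] [e f]; rewrite /bc_mul /bc_add /=; congr BiC; ring. Qed.
Lemma bc_one_neq0 : bc_one != 0.
Proof. apply/negP => /eqP [] /eqP; by rewrite oner_eq0. Qed.

HB.instance Definition _ := GRing.Zmodule_isComNzRing.Build T
  bc_mulA bc_mulC bc_mul1 bc_mulDl bc_one_neq0.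

Definition bcK (z : K) : T := BiC z 0.
End Bicomplex.

Notation BC R := (bicomplex (complex R)).

Section Idempotents.
Variable R : realType.
Local Open Scope complex_scope.
Definition i1 : BC R := bcK 'i.
Definition i2 : BC R := BiC 0 1.
Definition jj : BC R := i1 * i2.
Definition e1 : BC R := bcK (2%:R^-1) * (1 + jj).
Definition e2 : BC R := bcK (2%:R^-1) * (1 - jj).
(* idempotent components: lambda = lambda1 e1 + lambda2 e2 with
   lambda1 = z1 - i1 z2 and lambda2 = z1 + i1 z2 for lambda = z1 + z2 i2 *)
Definition idem1 (l : BC R) : complex R := bc1 l - 'i * bc2 l.
Definition idem2 (l : BC R) : complex R := bc1 l + 'i * bc2 l.
End Idempotents.

Definition is_basis (S A : Type) (add : A -> A -> A) (zero : A)
    (scale : S -> A -> A) (s0 : S) (P : A -> Prop) (n : nat) (b : 'I_n -> A) :=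
  [/\ (forall i, P (b i)),
      (forall x, P x -> exists c : 'I_n -> S, x = \big[add/zero]_(i < n) scale (c i) (b i))
    & (forall c : 'I_n -> S, \big[add/zero]_(i < n) scale (c i) (b i) = zero ->
         forall i, c i = s0)].

Section Modules.
Variable R : realType.
Variable M : lmodType (BC R).

Definition T_basis n (b : 'I_n -> M) :=
  is_basis +%R 0 (fun l x => l *: x) 0 (fun _ => True) b.

Definition inV n (m : 'I_n -> M) (x : M) : Prop :=
  exists xs : 'I_n -> complex R, x = \sum_(l < n) bcK (xs l) *: m l.

Definition C_basis_V n (m : 'I_n -> M) k (b : 'I_k -> M) :=
  is_basis +%R 0 (fun (z : complex R) x => bcK z *: x) 0 (inV m) b.

Definition addV2 (p q : M * M) : M * M := (p.1 + q.1, p.2 + q.2).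
Definition zeroV2 : M * M := (0, 0).
Definition scaleV2 (l : BC R) (p : M * M) : M * M :=
  (bcK (idem1 l) *: p.1, bcK (idem2 l) *: p.2).
Definition inV2 n (m : 'I_n -> M) (p : M * M) : Prop := inV m p.1 /\ inV m p.2.

Definition T_basis_V2 n (m : 'I_n -> M) k (b : 'I_k -> M * M) :=
  is_basis addV2 zeroV2 scaleV2 0 (inV2 m) b.
End Modules.


Lemma idem_decomp (R : realType) (l : BC R) :
  l = bcK (idem1 l) * e1 R + bcK (idem2 l) * e2 R.
Proof.
have m1 (x y : BC R) : bc1 (x * y) = bc1 x * bc1 y - bc2 x * bc2 y by [].
have m2 (x y : BC R) : bc2 (x * y) = bc1 x * bc2 y + bc2 x * bc1 y by [].
have a1 (x y : BC R) : bc1 (x + y) = bc1 x + bc1 y by [].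
have a2 (x y : BC R) : bc2 (x + y) = bc2 x + bc2 y by [].
have n1 (x : BC R) : bc1 (- x) = - bc1 x by [].
have n2 (x : BC R) : bc2 (- x) = - bc2 x by [].
have o1 : bc1 (1 : BC R) = 1 by []. have o2 : bc2 (1 : BC R) = 0 by [].
have h : ('i : complex R) * 'i = -1 by apply/eqP; rewrite eq_complex /=; apply/andP; split; apply/eqP; ring.
have h2 : (2%:R : complex R) != 0 by rewrite pnatr_eq0.
case: l => a b; rewrite /e1 /e2 /jj /i1 /i2 /idem1 /idem2 /bcK.
congr BiC; rewrite ?(m1, m2, a1, a2, n1, n2, o1, o2) /=; by field: h.
Qed.

(* Main.v *)
Require Import Defs.
From mathcomp Require Import all_boot all_order all_algebra.
From mathcomp Require Import complex reals.
From mathcomp Require Import ring.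
Import Order.TTheory GRing.Theory Num.Theory.
Local Open Scope ring_scope.

Section Alg.
Variable R : realType.
Implicit Types x y : BC R.

Lemma bc_ext x y : bc1 x = bc1 y -> bc2 x = bc2 y -> x = y.
Proof. by case: x; case: y => /= ? ? ? ? -> ->. Qed.
Lemma m1 x y : bc1 (x * y) = bc1 x * bc1 y - bc2 x * bc2 y. Proof. by []. Qed.
Lemma m2 x y : bc2 (x * y) = bc1 x * bc2 y + bc2 x * bc1 y. Proof. by []. Qed.
Lemma a1 x y : bc1 (x + y) = bc1 x + bc1 y. Proof. by []. Qed.
Lemma a2 x y : bc2 (x + y) = bc2 x + bc2 y. Proof. by []. Qed.
Lemma n1 x : bc1 (- x) = - bc1 x. Proof. by []. Qed.
Lemma n2 x : bc2 (- x) = - bc2 x. Proof. by []. Qed.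
Lemma o1 : bc1 (1 : BC R) = 1. Proof. by []. Qed.
Lemma o2 : bc2 (1 : BC R) = 0. Proof. by []. Qed.
Lemma z1 : bc1 (0 : BC R) = 0. Proof. by []. Qed.
Lemma z2 : bc2 (0 : BC R) = 0. Proof. by []. Qed.
Lemma k1 (a : complex R) : bc1 (bcK a) = a. Proof. by []. Qed.
Lemma k2 (a : complex R) : bc2 (bcK a) = 0. Proof. by []. Qed.
Lemma ii : ('i : complex R) * 'i = -1.
Proof. by apply/eqP; rewrite eq_complex /=; apply/andP; split; apply/eqP; ring. Qed.
Lemma two0 : (2%:R : complex R) != 0. Proof. by rewrite pnatr_eq0. Qed.

Ltac bcs := rewrite /e1 /e2 /jj /i1 /i2 /idem1 /idem2;
  rewrite ?(m1, m2, a1, a2, n1, n2, o1, o2, z1, z2, k1, k2) /=.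

Lemma bcK_add (a b : complex R) : bcK (a + b) = bcK a + bcK b :> BC R.
Proof. apply: bc_ext; bcs; ring. Qed.
Lemma bcK_mul (a b : complex R) : bcK (a * b) = bcK a * bcK b :> BC R.
Proof. apply: bc_ext; bcs; ring. Qed.
Lemma bcK0 : bcK 0 = 0 :> BC R.
Proof. by apply: bc_ext. Qed.
Lemma e11 : e1 R * e1 R = e1 R.
Proof. apply: bc_ext; bcs; (field: ii) => //; try exact: two0. Qed.
Lemma e22 : e2 R * e2 R = e2 R.
Proof. apply: bc_ext; bcs; (field: ii) => //; try exact: two0. Qed.
Lemma e12 : e1 R * e2 R = 0.
Proof. apply: bc_ext; bcs; (field: ii) => //; try exact: two0. Qed.
Lemma e1e2 : e1 R + e2 R = 1.
Proof. apply: bc_ext; bcs; (field: ii) => //; try exact: two0. Qed.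
Lemma e1K (a : complex R) : e1 R * bcK a = 0 -> a = 0.
Proof.
move=> H; have E : bc1 (e1 R * bcK a) = 2%:R^-1 * a by bcs; (field) => //; try exact: two0.
have -> : a = 2%:R * (2%:R^-1 * a) by (field) => //; try exact: two0.
by rewrite -E H z1 mulr0.
Qed.
Lemma e2K (a : complex R) : e2 R * bcK a = 0 -> a = 0.
Proof.
move=> H; have E : bc1 (e2 R * bcK a) = 2%:R^-1 * a by bcs; (field) => //; try exact: two0.
have -> : a = 2%:R * (2%:R^-1 * a) by (field) => //; try exact: two0.
by rewrite -E H z1 mulr0.
Qed.
Lemma idem_mk1 (a b : complex R) : idem1 (e1 R * bcK a + e2 R * bcK b) = a.
Proof. bcs; (field: ii) => //; try exact: two0. Qed.
Lemma idem_mk2 (a b : complex R) : idem2 (e1 R * bcK a + e2 R * bcK b) = b.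
Proof. bcs; (field: ii) => //; try exact: two0. Qed.
Lemma idem0 (l : BC R) : idem1 l = 0 -> idem2 l = 0 -> l = 0.
Proof.
rewrite /idem1 /idem2 => H1 H2; apply: bc_ext; rewrite ?z1 ?z2.
  have -> : bc1 l = 2%:R^-1 * ((bc1 l - 'i * bc2 l) + (bc1 l + 'i * bc2 l)) by (field) => //; try exact: two0.
  by rewrite H1 H2 addr0 mulr0.
have -> : bc2 l = 2%:R^-1 * 'i * ((bc1 l - 'i * bc2 l) - (bc1 l + 'i * bc2 l)) by (field: ii) => //; try exact: two0.
by rewrite H1 H2 subr0 mulr0.
Qed.
Lemma idem_dec (l : BC R) : l = e1 R * bcK (idem1 l) + e2 R * bcK (idem2 l).
Proof. by rewrite [LHS]idem_decomp mulrC [X in _ + X]mulrC. Qed.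
End Alg.

Section Main.
Set Implicit Arguments.
Variable R : realType.
Variable M : lmodType (BC R).

Lemma bigV2 k (F : 'I_k -> M * M) :
  \big[@addV2 R M/zeroV2 M]_(i < k) F i = (\sum_(i < k) (F i).1, \sum_(i < k) (F i).2).
Proof.
rewrite [LHS]surjective_pairing; congr pair.
  by apply: (big_morph fst).
by apply: (big_morph snd).
Qed.

Lemma bcK_sum k (p : 'I_k -> complex R) : bcK (\sum_(i < k) p i) = \sum_(i < k) bcK (p i) :> BC R.
Proof. by apply: (big_morph (@bcK _)); [exact: bcK_add | exact: bcK0]. Qed.

Lemma split_sum k (w : 'I_k -> M) (p q : 'I_k -> complex R) :
  \sum_(i < k) (e1 R * bcK (p i) + e2 R * bcK (q i)) *: w i =
  e1 R *: \sum_(i < k) bcK (p i) *: w i + e2 R *: \sum_(i < k) bcK (q i) *: w i.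
Proof.
rewrite !scaler_sumr -big_split; apply: eq_bigr => i _.
by rewrite scalerDl !scalerA.
Qed.

Lemma inV0 n (m : 'I_n -> M) : inV m 0.
Proof. exists (fun _ => 0); by rewrite big1 // => i _; rewrite bcK0 scale0r. Qed.

Lemma inVD n (m : 'I_n -> M) x y : inV m x -> inV m y -> inV m (x + y).
Proof.
move=> [a ->] [b ->]; exists (fun l => a l + b l).
by rewrite -big_split; apply: eq_bigr => i _; rewrite bcK_add scalerDl.
Qed.

Lemma inVZ n (m : 'I_n -> M) z x : inV m x -> inV m (bcK z *: x).
Proof.
move=> [a ->]; exists (fun l => z * a l).
by rewrite scaler_sumr; apply: eq_bigr => i _; rewrite bcK_mul scalerA.
Qed.

Lemma inV_comb n (m : 'I_n -> M) k (w : 'I_k -> M) (p : 'I_k -> complex R) :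
  (forall i, inV m (w i)) -> inV m (\sum_(i < k) bcK (p i) *: w i).
Proof.
move=> Hw; apply: (big_ind (inV m)); first exact: inV0.
  by move=> x y; apply: inVD.
by move=> i _; apply: inVZ.
Qed.

Lemma inV_e1 n (m : 'I_n -> M) (Hm : T_basis m) y :
  inV m y -> e1 R *: y = 0 -> y = 0.
Proof.
case: Hm => _ _ Hind [xs ->] H.
have H0 : forall l, xs l = 0.
  move=> l; apply: e1K; apply: (Hind (fun l => e1 R * bcK (xs l))).
  by rewrite -[RHS]H scaler_sumr; apply: eq_bigr => i _; rewrite scalerA.
by rewrite big1 // => i _; rewrite H0 bcK0 scale0r.
Qed.

Lemma inV_e2 n (m : 'I_n -> M) (Hm : T_basis m) y :
  inV m y -> e2 R *: y = 0 -> y = 0.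
Proof.
case: Hm => _ _ Hind [xs ->] H.
have H0 : forall l, xs l = 0.
  move=> l; apply: e2K; apply: (Hind (fun l => e2 R * bcK (xs l))).
  by rewrite -[RHS]H scaler_sumr; apply: eq_bigr => i _; rewrite scalerA.
by rewrite big1 // => i _; rewrite H0 bcK0 scale0r.
Qed.
Lemma inV_m n (m : 'I_n -> M) i : inV m (m i).
Proof.
exists (fun l => (l == i)%:R); rewrite (bigD1 i) //= eqxx big1 ?addr0.
  by rewrite scale1r.
by move=> l /negbTE ->; rewrite bcK0 scale0r.
Qed.
End Main.

Theorem mainTheorem4 (R : realType) (M : lmodType (BC R)) (n : nat)
    (m : 'I_n -> M) (Hm : T_basis m)
    (v : 'I_n -> M) (Hv : C_basis_V m v) :
  T_basis_V2 m (fun l => (v l, v l)) /\ T_basis v.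
Proof.
have Hm' := Hm.
case: Hm' => _ Hmspan Hmind; case: Hv => Hvin Hvspan Hvind.
split.
  split.
  - by move=> i; split; apply: Hvin.
  - move=> [x y] [/= Hx Hy].
    have [a Ha] := Hvspan x Hx; have [b Hb] := Hvspan y Hy.
    exists (fun i => e1 R * bcK (a i) + e2 R * bcK (b i)).
    rewrite bigV2 /=; congr pair.
      by rewrite Ha; apply: eq_bigr => i _; rewrite idem_mk1.
    by rewrite Hb; apply: eq_bigr => i _; rewrite idem_mk2.
  - move=> c H i; rewrite bigV2 /= in H.
    have H1 := congr1 fst H; have H2 := congr1 snd H; rewrite /= in H1 H2.
    apply: idem0.
      exact: (Hvind (fun i => idem1 (c i)) H1).
    exact: (Hvind (fun i => idem2 (c i)) H2).
split.
- by [].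
- move=> x _; have [lam Hx] := Hmspan x I.
  have [a Ha] := Hvspan _ (@inV_comb R M n m n m (fun i => idem1 (lam i)) (fun i => @inV_m R M n m i)).
  have [b Hb] := Hvspan _ (@inV_comb R M n m n m (fun i => idem2 (lam i)) (fun i => @inV_m R M n m i)).
  exists (fun i => e1 R * bcK (a i) + e2 R * bcK (b i)).
  rewrite split_sum -Ha -Hb -split_sum Hx.
  by apply: eq_bigr => i _; rewrite -idem_dec.
- move=> c H i.
  have Hc : \sum_(i < n) c i *: v i = \sum_(i < n) (e1 R * bcK (idem1 (c i)) + e2 R * bcK (idem2 (c i))) *: v i.
    by apply: eq_bigr => j _; rewrite -idem_dec.
  rewrite Hc split_sum in H.
  have HY : inV m (\sum_(i < n) bcK (idem1 (c i)) *: v i) by apply: inV_comb.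
  have HZ : inV m (\sum_(i < n) bcK (idem2 (c i)) *: v i) by apply: inV_comb.
  have H1 := congr1 (fun x => e1 R *: x) H; have H2 := congr1 (fun x => e2 R *: x) H.
  rewrite /= !scalerDr !scalerA e11 e12 scale0r addr0 scaler0 in H1.
  rewrite /= !scalerDr !scalerA e22 mulrC e12 scale0r add0r scaler0 in H2.
  apply: idem0.
    exact: (Hvind _ (inV_e1 Hm HY H1)).
  exact: (Hvind _ (inV_e2 Hm HZ H2)).
Qed.
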